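(* Let $\Sigma$ be an alphabet. The transition systems labelled on $\Sigma$ are exactly the objects of the slice topos $\mathcal{G}/\Sigma$ which are separated for the double negation topology of $\mathcal{G}/\Sigma$.
   Context: $\mathcal{G}=\mathbf{Sets}^{\Gamma^{op}}$ is the topos of graphs ($\Gamma$ has objects $N,A$ and arrows $s,t:N\to A$; a graph has nodes, arcs and source/target maps, with parallel arcs and self-loops allowed; morphisms preserve source and target). For a set $\Sigma$, also denote by $\Sigma$ the graph with one node and arc set $\Sigma$. The slice topos $\mathcal{G}/\Sigma$ has as objects morphisms $g:G\to\Sigma$ (i.e., graphs whose arcs are labelled by elements of $\Sigma$) and as morphisms label-preserving graph morphisms. A transition system labelled on $\Sigma$ is an object $g:G\to\Sigma$ such that for every pair of nodes $x,y$ and every $\alpha\in\Sigma$ there is at most one arc from $x$ to $y$ labelled $\alpha$. The double negation topology of a topos is $\neg\neg:\Omega\to\Omega$, where $\neg$ is the classifying map of false $\perp:1\to\Omega$. An object $X$ is separated for a topology $j$ if for every object $Y$, every $j$-dense subobject $m:S\hookrightarrow Y$ (one whose closure, classified by $j\circ\chi_m$, is $Y$) and every $f:S\to X$ there is at most one $h:Y\to X$ with $h\circ m=f$. *)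

(* Defs.v *)
Set Implicit Arguments.
Unset Strict Implicit.

Record Graph := mkGraph {
  node : Type;
  arc  : Type;
  src  : arc -> node;
  tgt  : arc -> node }.
Arguments src : clear implicits.
Arguments tgt : clear implicits.

Record ghom (G H : Graph) := mkGhom {
  gN : node G -> node H;
  gA : arc G -> arc H;
  gsrc : forall e, src H (gA e) = gN (src G e);
  gtgt : forall e, tgt H (gA e) = gN (tgt G e) }.

Definition ghom_eq (G H : Graph) (f g : ghom G H) : Prop :=
  (forall x, gN f x = gN g x) /\ (forall e, gA f e = gA g e).

Definition ghom_comp (G H K : Graph) (g : ghom H K) (f : ghom G H) : ghom G K :=
  {| gN := fun x => gN g (gN f x);
     gA := fun e => gA g (gA f e);
     gsrc := fun e => eq_trans (gsrc g (gA f e)) (f_equal (gN g) (gsrc f e));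
     gtgt := fun e => eq_trans (gtgt g (gA f e)) (f_equal (gN g) (gtgt f e)) |}.

Definition SigmaGraph (Sigma : Type) : Graph :=
  {| node := unit; arc := Sigma; src := fun _ => tt; tgt := fun _ => tt |}.

Record LGraph (Sigma : Type) := mkLGraph {
  lgr :> Graph;
  lmap : ghom lgr (SigmaGraph Sigma) }.

Definition lab (Sigma : Type) (X : LGraph Sigma) (e : arc X) : Sigma :=
  gA (lmap X) e.
Arguments lab {Sigma} X e.

Record LHom (Sigma : Type) (X Y : LGraph Sigma) := mkLHom {
  lh :> ghom X Y;
  lh_comm : ghom_eq (ghom_comp (lmap Y) lh) (lmap X) }.

Definition lhom_eq (Sigma : Type) (X Y : LGraph Sigma) (f g : LHom X Y) : Prop :=
  ghom_eq f g.

Lemma lhom_comp_comm (Sigma : Type) (X Y Z : LGraph Sigma)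
  (g : LHom Y Z) (f : LHom X Y) :
  ghom_eq (ghom_comp (lmap Z) (ghom_comp g f)) (lmap X).
Proof.
  split.
  - intros x. simpl. destruct (gN (lmap Z) (gN g (gN f x))), (gN (lmap X) x). reflexivity.
  - intros e. simpl.
    exact (eq_trans (proj2 (lh_comm g) (gA f e)) (proj2 (lh_comm f) e)).
Qed.

Definition lhom_comp (Sigma : Type) (X Y Z : LGraph Sigma)
  (g : LHom Y Z) (f : LHom X Y) : LHom X Z :=
  {| lh := ghom_comp g f; lh_comm := lhom_comp_comm g f |}.

Definition mono (Sigma : Type) (S Y : LGraph Sigma) (m : LHom S Y) : Prop :=
  forall (Z : LGraph Sigma) (u v : LHom Z S),
    lhom_eq (lhom_comp m u) (lhom_comp m v) -> lhom_eq u v.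

(** * G/Sigma as a presheaf topos on the category of elements of Sigma.
    Its objects ("stages") are the node N and, for each alpha in Sigma, the
    arc A_alpha; the non-identity arrows are s_alpha, t_alpha : N -> A_alpha. *)
Inductive stage (Sigma : Type) : Type :=
| SN : stage Sigma
| SA : Sigma -> stage Sigma.
Arguments SN {Sigma}.
Arguments SA {Sigma} _.

Inductive arr (Sigma : Type) : stage Sigma -> stage Sigma -> Type :=
| aid : forall c, arr c c
| asrc : forall a, arr SN (SA a)
| atgt : forall a, arr SN (SA a).
Arguments aid {Sigma} c.
Arguments asrc {Sigma} a.
Arguments atgt {Sigma} a.

Definition comp_SN (Sigma : Type) (e : stage Sigma) (h : arr e SN) (a : Sigma)
  : arr e (SA a) :=
  match h in arr e' d' return
        (match d' with SN => arr e' (SA a) | SA _ => unit end) with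
  | aid c0 => match c0 return
                (match c0 with SN => arr c0 (SA a) | SA _ => unit end) with
              | SN => asrc a
              | SA _ => tt
              end
  | asrc _ => tt
  | atgt _ => tt
  end.

Definition comp_SN' (Sigma : Type) (e : stage Sigma) (h : arr e SN) (a : Sigma)
  : arr e (SA a) :=
  match h in arr e' d' return
        (match d' with SN => arr e' (SA a) | SA _ => unit end) with
  | aid c0 => match c0 return
                (match c0 with SN => arr c0 (SA a) | SA _ => unit end) with
              | SN => atgt a
              | SA _ => tt
              end
  | asrc _ => tt
  | atgt _ => tt
  end.

Definition comp (Sigma : Type) (c d e : stage Sigma) (f : arr d c) : arr e d -> arr e c :=
  match f in arr d0 c0 return arr e d0 -> arr e c0 with
  | aid _ => fun g => g
  | asrc a => fun g => comp_SN g a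
  | atgt a => fun g => comp_SN' g a
  end.

Definition elt (Sigma : Type) (X : LGraph Sigma) (c : stage Sigma) : Type :=
  match c with
  | SN => node X
  | SA a => { e : arc X | lab X e = a }
  end.

Definition act (Sigma : Type) (X : LGraph Sigma) (c d : stage Sigma) (f : arr d c)
  : elt X c -> elt X d :=
  match f in arr d0 c0 return elt X c0 -> elt X d0 with
  | aid _ => fun y => y
  | asrc a => fun y => src X (proj1_sig y)
  | atgt a => fun y => tgt X (proj1_sig y)
  end.

Definition mapelt (Sigma : Type) (X Y : LGraph Sigma) (h : LHom X Y) (c : stage Sigma)
  : elt X c -> elt Y c :=
  match c return elt X c -> elt Y c with
  | SN => fun x => gN h x
  | SA a => fun x =>
      exist (fun e => lab Y e = a) (gA h (proj1_sig x))
            (eq_trans (proj2 (lh_comm h) (proj1_sig x)) (proj2_sig x))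
  end.

(** Sieve-valued predicates on a stage c: the points of Omega(c) are sieves on c. *)
Definition spred (Sigma : Type) (c : stage Sigma) : Type :=
  forall d : stage Sigma, arr d c -> Prop.

(** Negation  neg : Omega -> Omega, the classifying map of false : 1 -> Omega:
    neg R = { f : d -> c | f^* R is the empty sieve }. *)
Definition neg (Sigma : Type) (c : stage Sigma) (R : spred c) : spred c :=
  fun d f => forall (e : stage Sigma) (g : arr e d), ~ R e (comp f g).

(** Characteristic map chi_m : Y -> Omega of m : S -> Y, at an element y of Y(c):
    the sieve of arrows f with y.f factoring through m. *)
Definition chi (Sigma : Type) (S Y : LGraph Sigma) (m : LHom S Y)
  (c : stage Sigma) (y : elt Y c) : spred c :=
  fun d f => exists s : elt S d, mapelt m s = act f y.

(** m is dense for the double negation topology: the closure of m, classified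
    by (neg o neg) o chi_m, is all of Y (i.e. contains every element y). *)
Definition negneg_dense (Sigma : Type) (S Y : LGraph Sigma) (m : LHom S Y) : Prop :=
  forall (c : stage Sigma) (y : elt Y c), neg (neg (chi m y)) (aid c).

Definition negneg_separated (Sigma : Type) (X : LGraph Sigma) : Prop :=
  forall (Y S : LGraph Sigma) (m : LHom S Y),
    mono m -> negneg_dense m ->
    forall (f : LHom S X) (h1 h2 : LHom Y X),
      lhom_eq (lhom_comp h1 m) f -> lhom_eq (lhom_comp h2 m) f -> lhom_eq h1 h2.

Definition transition_system (Sigma : Type) (X : LGraph Sigma) : Prop :=
  forall (x y : node X) (alpha : Sigma) (e1 e2 : arc X),
    src X e1 = x -> tgt X e1 = y -> lab X e1 = alpha ->
    src X e2 = x -> tgt X e2 = y -> lab X e2 = alpha ->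
    e1 = e2.

(* Main.v *)
Require Import Defs.
From Stdlib Require Import Classical.

Section Constr.
Variables (Sigma : Type) (X : LGraph Sigma) (x y : node X) (alpha : Sigma).

Definition Sg : Graph := @mkGraph (node X) Empty_set (fun e : Empty_set => match e with end)
                                 (fun e : Empty_set => match e with end).
Definition Sl : ghom Sg (SigmaGraph Sigma).
Proof.
  unshelve econstructor.
  - exact (fun _ => tt).
  - exact (fun e : Empty_set => match e with end).
  - intros [].
  - intros [].
Defined.
Definition SL : LGraph Sigma := mkLGraph Sl.

Definition Yg : Graph := @mkGraph (node X) unit (fun _ : unit => x) (fun _ : unit => y).
Definition Yl : ghom Yg (SigmaGraph Sigma).
Proof.
  unshelve econstructor.
  - exact (fun _ => tt).
  - exact (fun _ => alpha).
  - reflexivity.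
  - reflexivity.
Defined.
Definition YL : LGraph Sigma := mkLGraph Yl.

Definition mg : ghom SL YL.
Proof.
  unshelve econstructor.
  - exact (fun n => n).
  - exact (fun e : Empty_set => match e with end).
  - intros [].
  - intros [].
Defined.
Definition mL : LHom SL YL.
Proof.
  exists mg. split.
  - intros n. simpl. destruct (gN (lmap SL) n). reflexivity.
  - intros [].
Defined.

Definition fg : ghom SL X.
Proof.
  unshelve econstructor.
  - exact (fun n => n).
  - exact (fun e : Empty_set => match e with end).
  - intros [].
  - intros [].
Defined.
Definition fL : LHom SL X.
Proof.
  exists fg. split.
  - intros n. simpl. destruct (gN (lmap X) n), (gN (lmap SL) n). reflexivity.
  - intros [].
Defined.

Definition hg (e : arc X) (Hs : src X e = x) (Ht : tgt X e = y) : ghom YL X.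
Proof.
  unshelve econstructor.
  - exact (fun n => n).
  - exact (fun _ => e).
  - intros ?. exact Hs.
  - intros ?. exact Ht.
Defined.
Definition hL (e : arc X) (Hs : src X e = x) (Ht : tgt X e = y) (Hl : lab X e = alpha)
  : LHom YL X.
Proof.
  exists (hg e Hs Ht). split.
  - intros n. simpl. destruct (gN (lmap X) n), (gN (lmap YL) n). reflexivity.
  - intros ?. exact Hl.
Defined.
End Constr.

Lemma arr_SN_case (Sigma : Type) (P : forall e : stage Sigma, arr e SN -> Prop) :
  P SN (aid SN) -> forall e g, P e g.
Proof.
  intros H e g.
  refine (match g as g0 in arr e0 c0 return
            (match c0 return arr e0 c0 -> Prop with
             | SN => fun g1 => P e0 g1 | SA _ => fun _ => True end) g0 with
          | aid c0 => _ | asrc _ => I | atgt _ => I end).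
  destruct c0; [exact H | exact I].
Qed.

Lemma arr_from_SN (Sigma : Type) (e : stage Sigma) : arr SN e.
Proof. destruct e. exact (aid SN). exact (asrc s). Defined.

Theorem theorem5 (Sigma : Type) (X : LGraph Sigma) :
  transition_system X <-> negneg_separated X.
Proof.
  split.
  - intros TS Y S m _ Hd f h1 h2 E1 E2.
    assert (HN : forall n : node Y, gN h1 n = gN h2 n).
    { intros n. apply NNPP. intros Hne.
      apply (Hd SN n SN (aid SN)).
      unfold neg. intros e0 g0. revert e0 g0. simpl.
      apply (@arr_SN_case Sigma (fun e' g' => ~ @chi Sigma S Y m SN n e' (comp (aid SN) g'))).
      intros [s Hs]. simpl in Hs. apply Hne. subst n.
      pose proof (proj1 E1 s) as A. pose proof (proj1 E2 s) as B.
      simpl in A, B. congruence. }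
    split; [exact HN|].
    intros a.
    apply (TS (gN h1 (src Y a)) (gN h1 (tgt Y a)) (lab Y a)).
    + apply gsrc.
    + apply gtgt.
    + exact (proj2 (lh_comm h1) a).
    + rewrite gsrc. symmetry. apply HN.
    + rewrite gtgt. symmetry. apply HN.
    + exact (proj2 (lh_comm h2) a).
  - intros Hsep x y alpha e1 e2 S1 T1 L1 S2 T2 L2.
    assert (Hm : mono (@mL Sigma X x y alpha)).
    { intros Z u v [Hn _]. split.
      - intros n. exact (Hn n).
      - intros a. destruct (gA u a). }
    assert (Hd : negneg_dense (@mL Sigma X x y alpha)).
    { intros c n e g H. apply (H SN (@arr_from_SN Sigma e)).
      exists (act (comp (aid c) (comp g (@arr_from_SN Sigma e))) n). reflexivity. }
    assert (E : forall (e : arc X) (Hs : src X e = x) (Ht : tgt X e = y)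
                  (Hl : lab X e = alpha),
               lhom_eq (lhom_comp (@hL Sigma X x y alpha e Hs Ht Hl) (@mL Sigma X x y alpha)) (@fL Sigma X)).
    { intros e Hs Ht Hl. split.
      - intros n. reflexivity.
      - intros []. }
    destruct (Hsep _ _ _ Hm Hd (@fL Sigma X) (@hL Sigma X x y alpha e1 S1 T1 L1) (@hL Sigma X x y alpha e2 S2 T2 L2) (E _ _ _ _) (E _ _ _ _))
      as [_ HA].
    exact (HA tt).
Qed.
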